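(* Let $r\ge2$ be an integer, $m,\ell$ positive integers with $r<2^m$, let $\alpha_0\neq0$ be a real number with $\alpha_0\in(-r/2,r/2]$, and let $B$ be an integer with $1\le B<B_{\max}=(2^{m+\ell}/r-1)/2$. Then $$\sum_{t=-B}^{B}P(\alpha_0+rt)=\frac1r(1-\epsilon_R)+\epsilon_A$$ where $$0\le\epsilon_R\le\frac{1}{\pi^2}\left(\frac{2}{B}+\frac{1}{B^2}+\frac{1}{3B^3}\right)\quad\text{and}\quad|\epsilon_A|\le(2B+1)\tilde\epsilon,\qquad \tilde\epsilon=\frac{\pi^2}{2^{m+\ell}}\left(\frac34+\frac{r}{2^{m+\ell}}\cdot\frac1{12}\right).$$
   Context: Let $\beta=2^{m+\ell}\bmod r$ and $L=\lfloor 2^{m+\ell}/r\rfloor$. For real $\alpha$ not a multiple of $2^{m+\ell}$, $$P(\alpha)=\frac{\beta}{2^{2(m+\ell)}}\cdot\frac{1-\cos(2\pi\alpha(L+1)/2^{m+\ell})}{1-\cos(2\pi\alpha/2^{m+\ell})}+\frac{r-\beta}{2^{2(m+\ell)}}\cdot\frac{1-\cos(2\pi\alpha L/2^{m+\ell})}{1-\cos(2\pi\alpha/2^{m+\ell})}.$$ *)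

(* Defs.v *)
From Stdlib Require Import Reals Lra Lia Arith.
Open Scope R_scope.

Definition Nn (m l : nat) : nat := (2 ^ (m + l))%nat.

Definition beta (r m l : nat) : nat := Nat.modulo (Nn m l) r.
Definition Lq (r m l : nat) : nat := Nat.div (Nn m l) r.

(* P(alpha) as in the paper (defined for alpha not a multiple of 2^(m+l)) *)
Definition P (r m l : nat) (alpha : R) : R :=
  let N := INR (Nn m l) in
  let b := INR (beta r m l) in
  let L := INR (Lq r m l) in
  b / (N ^ 2) * ((1 - cos (2 * PI * alpha * (L + 1) / N)) / (1 - cos (2 * PI * alpha / N)))
  + (INR r - b) / (N ^ 2) * ((1 - cos (2 * PI * alpha * L / N)) / (1 - cos (2 * PI * alpha / N))).

(* sum_{t=-B}^{B} P(alpha0 + r t), reindexed as i = t + B in 0..2B *)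
Definition sumP (r m l : nat) (alpha0 : R) (B : nat) : R :=
  sum_f_R0 (fun i => P r m l (alpha0 + INR r * (INR i - INR B))) (2 * B).

Definition eps_tilde (r m l : nat) : R :=
  PI ^ 2 / INR (Nn m l) * (3 / 4 + INR r / INR (Nn m l) * (1 / 12)).

(* Main.v *)
Require Import Defs.
From Stdlib Require Import Reals Lra Lia Psatz.
Open Scope R_scope.

Lemma pow2_gt_0 x : x <> 0 -> 0 < x^2.
Proof. intros h. replace (x^2) with (Rsqr x) by (unfold Rsqr; ring). apply Rsqr_pos_lt; auto. Qed.

Lemma sin_lb3 u : 0 <= u -> u <= PI -> u - u^3/6 <= sin u.
Proof.
  intros h1 h2. destruct (sin_bound u 0 h1 h2) as [H _].
  unfold sin_approx, sin_term in H. simpl in H.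
  match type of H with ?A <= _ => replace (u - u^3/6) with A end. exact H. field.
Qed.

Lemma sin_le_id u : 0 <= u -> sin u <= u.
Proof. intros h. destruct (Req_dec u 0) as [->|]. rewrite sin_0; lra.
  left; apply sin_lt_x; lra. Qed.

Lemma sin_sq_le u : sin u ^ 2 <= u ^ 2.
Proof.
  destruct (Rle_dec 0 u).
  - destruct (Rle_dec u PI).
    + pose proof (sin_ge_0 u r r0). pose proof (sin_le_id u r). nra.
    + pose proof (SIN_bound u). pose proof PI2_1. nra.
  - assert (0 <= -u) by lra.
    destruct (Rle_dec (-u) PI).
    + pose proof (sin_ge_0 (-u) H r). pose proof (sin_le_id (-u) H).
      rewrite sin_neg in *. nra.
    + pose proof (SIN_bound u). pose proof PI2_1. nra.
Qed.

Lemma one_m_cos_le y : 1 - cos y <= y^2/2.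
Proof.
  replace y with (2*(y/2)) at 1 by field. rewrite cos_2a_sin.
  pose proof (sin_sq_le (y/2)). nra.
Qed.

Lemma one_m_cos_ge0 y : 0 <= 1 - cos y.
Proof. pose proof (COS_bound y). lra. Qed.
Lemma one_m_cos_le2 y : 1 - cos y <= 2.
Proof. pose proof (COS_bound y). lra. Qed.

Lemma sin_sq_lb u : 0 <= u -> u <= PI/2 -> (u*(1-u^2/6))^2 <= sin u ^2.
Proof.
  intros h1 h2. pose proof PI_4. pose proof (sin_lb3 u h1 ltac:(lra)).
  assert (0 <= u*(1-u^2/6)). { apply Rmult_le_pos; nra. }
  nra.
Qed.

Lemma sin_sq_lb_abs u : Rabs u <= PI/2 -> (u*(1-u^2/6))^2 <= sin u ^2.
Proof.
  intros h. destruct (Rle_dec 0 u).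
  - apply sin_sq_lb; auto. rewrite Rabs_right in h; lra.
  - rewrite Rabs_left in h by lra. pose proof (sin_sq_lb (-u) ltac:(lra) h).
    rewrite sin_neg in H. nra.
Qed.

Lemma inv_cos_bounds y : y <> 0 -> Rabs y <= PI ->
  0 < 1 - cos y /\ 2 / y^2 <= / (1 - cos y) <= 2/y^2 + 1.
Proof.
  intros hy hb. set (u := y/2).
  assert (hc : 1 - cos y = 2 * sin u ^ 2).
  { replace y with (2*u) at 1 by (unfold u; field). rewrite cos_2a_sin. ring. }
  assert (hu : Rabs u <= PI/2). { unfold u. unfold Rdiv. rewrite Rabs_mult.
    rewrite (Rabs_right (/2)) by lra. lra. }
  assert (hu0 : u <> 0) by (unfold u; lra).
  pose proof (sin_sq_lb_abs u hu). pose proof (sin_sq_le u).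
  assert (hyu : y = 2*u) by (unfold u; field). rewrite hc. rewrite hyu.
  assert (hu2 : 0 < u^2) by (apply pow2_gt_0; auto).
  assert (hua : u^2 <= PI^2/4). { rewrite <- (pow2_abs u). pose proof (Rabs_pos u). nra. }
  pose proof PI_4.
  assert (PI^2 <= 16) by (pose proof PI_RGT_0; nra). assert (ha : u^2/6 <= 2/3) by nra.
  assert (hs : 0 < sin u ^2).
  { assert (0 < (u * (1 - u ^ 2 / 6)) ^ 2).
    { apply pow2_gt_0. apply Rmult_integral_contrapositive; split; auto. lra. }
    lra. }
  split; [lra|]. split.
  - replace (2 / (2*u)^2) with (/ (2 * u^2)) by (field; auto).
    apply Rinv_le_contravar; lra.
  - replace (2 / (2*u)^2 + 1) with ((1 + 2*u^2) / (2 * u^2)) by (field; auto).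
    assert (hp : 0 <= 12*(u^2/6)*(2/3 - (u^2/6))*(5/4-(u^2/6))). { apply Rmult_le_pos; [apply Rmult_le_pos|]; nra. }
    assert (hk : (u * (1 - u ^ 2 / 6)) ^ 2 * (1 + 2*u^2) >= u^2) .
    { replace ((u * (1 - u ^ 2 / 6)) ^ 2 * (1 + 2*u^2)) with (u^2 * ((1-(u^2/6))^2*(1+12*(u^2/6)))) by field.
      assert ((1-(u^2/6))^2*(1+12*(u^2/6)) = 1 + 12*(u^2/6)*(2/3-(u^2/6))*(5/4-(u^2/6))) by field. nra. }
    assert (hk3 : u^2 <= sin u ^2 * (1 + 2*u^2)). { assert (hq: 0 <= 1+2*u^2) by nra. pose proof (Rmult_le_compat_r _ _ _ hq H). lra. }
    assert (E: (1 + 2*u^2)/(2*u^2) - /(2*sin u^2) = (sin u^2*(1+2*u^2) - u^2) / (2*u^2*sin u^2)) by (assert (sin u <> 0) by (intro hz; rewrite hz in hs; lra); field; repeat split; auto).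
    assert (0 <= (sin u^2*(1+2*u^2) - u^2) / (2*u^2*sin u^2)).
    { apply Rmult_le_pos; [lra| left; apply Rinv_0_lt_compat; nra]. }
    lra.
Qed.

Lemma sin_minus_id b : Rabs (sin b - b) <= b^2.
Proof.
  assert (forall b, 0 <= b -> Rabs (sin b - b) <= b^2).
  { intros c hc. pose proof (sin_le_id c hc). rewrite Rabs_left1 by lra.
    pose proof PI2_1. destruct (Rle_dec c 2).
    - pose proof (sin_lb3 c hc ltac:(lra)). nra.
    - pose proof (SIN_bound c). nra. }
  destruct (Rle_dec 0 b). auto.
  pose proof (H (-b) ltac:(lra)). rewrite sin_neg in H0.
  replace (sin b - b) with (-(- sin b - - b)) by ring. rewrite Rabs_Ropp. nra.
Qed.

Lemma E_lemma a b : Rabs ((1 - cos (a+b)) - (1 - cos a) - b * sin a) <= 3/2 * b^2.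
Proof.
  rewrite cos_plus.
  replace (1 - (cos a * cos b - sin a * sin b) - (1 - cos a) - b * sin a)
    with (cos a * (1 - cos b) + sin a * (sin b - b)) by ring.
  eapply Rle_trans. apply Rabs_triang. rewrite !Rabs_mult.
  pose proof (one_m_cos_le b). pose proof (one_m_cos_ge0 b). pose proof (sin_minus_id b).
  rewrite (Rabs_right (1 - cos b)) by lra.
  pose proof (Rabs_pos (cos a)). pose proof (Rabs_pos (sin a)). pose proof (Rabs_pos (sin b - b)).
  assert (Rabs (cos a) <= 1) by (apply Rabs_le; apply COS_bound).
  assert (Rabs (sin a) <= 1) by (apply Rabs_le; apply SIN_bound).
  nra.
Qed.

Fixpoint sumR (f : nat -> R) (n : nat) : R :=
  match n with O => 0 | S k => sumR f k + f k end.

Lemma sumR_S f n : sumR f (S n) = sumR f n + f n.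
Proof. reflexivity. Qed.

Lemma sumR_ext f g n : (forall i, (i < n)%nat -> f i = g i) -> sumR f n = sumR g n.
Proof. induction n; simpl; intros H; auto. rewrite IHn, H; auto. Qed.
Lemma sumR_plus f g n : sumR (fun i => f i + g i) n = sumR f n + sumR g n.
Proof. induction n; simpl; [ring|rewrite IHn; ring]. Qed.
Lemma sumR_minus f g n : sumR (fun i => f i - g i) n = sumR f n - sumR g n.
Proof. induction n; simpl; [ring|rewrite IHn; ring]. Qed.
Lemma sumR_scal c f n : sumR (fun i => c * f i) n = c * sumR f n.
Proof. induction n; simpl; [ring|rewrite IHn; ring]. Qed.
Lemma sumR_const c n : sumR (fun _ => c) n = c * INR n.
Proof. induction n; simpl sumR; [simpl; ring|rewrite IHn, S_INR; ring]. Qed.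
Lemma sumR_swap (F : nat -> nat -> R) n m :
  sumR (fun i => sumR (fun j => F i j) m) n = sumR (fun j => sumR (fun i => F i j) n) m.
Proof. induction n; simpl.
  - induction m; simpl; [auto| rewrite <- IHm; ring].
  - rewrite IHn, <- sumR_plus. auto. Qed.
Lemma sumR_sum_f f n : sumR f (S n) = sum_f_R0 f n.
Proof. induction n; simpl; [ring|]. simpl in IHn. rewrite <- IHn. ring. Qed.
Lemma sumR_shift f n : sumR f (S n) = f O + sumR (fun i => f (S i)) n.
Proof. induction n; simpl; [ring|]. simpl in IHn. rewrite IHn. ring. Qed.
Lemma sumR_le f g n : (forall i, (i < n)%nat -> f i <= g i) -> sumR f n <= sumR g n.
Proof. induction n; simpl; intros H; [lra|]. pose proof (H n ltac:(lia)). pose proof (IHn ltac:(intros; apply H; lia)). lra. Qed.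
Lemma sumR_nonneg f n : (forall i, (i < n)%nat -> 0 <= f i) -> 0 <= sumR f n.
Proof. intros. replace 0 with (sumR (fun _ => 0) n). apply sumR_le; auto.
  rewrite sumR_const; ring. Qed.

Lemma cos_tel a b n : 2 * sin (b/2) * sumR (fun p => cos (a + INR p * b)) n
   = sin (a + INR n * b - b/2) - sin (a - b/2).
Proof.
  induction n; simpl sumR.
  - replace (a + INR 0 * b - b/2) with (a - b/2) by (simpl; lra). rewrite Rmult_0_r. ring.
  - rewrite Rmult_plus_distr_l, IHn, S_INR.
    set (c := a + INR n * b).
    replace (a + INR n * b - b/2) with (c - b/2) by (unfold c; field).
    replace (a + (INR n + 1) * b - b/2) with (c + b/2) by (unfold c; field).
    rewrite sin_plus, sin_minus. ring.
Qed.

Lemma cos_sum_zero a n j : (0 < j < n)%nat ->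
  sumR (fun p => cos (a + INR p * (2*PI*INR j/INR n))) n = 0.
Proof.
  intros [h1 h2]. set (b := 2*PI*INR j/INR n).
  assert (hn : 0 < INR n) by (apply lt_0_INR; lia).
  assert (hj : 0 < INR j) by (apply lt_0_INR; lia).
  assert (hjn : INR j < INR n) by (apply lt_INR; lia).
  pose proof (cos_tel a b n).
  assert (hs : 0 < sin (b/2)).
  { apply sin_gt_0; unfold b.
    - pose proof PI_RGT_0. apply Rmult_lt_0_compat; [|lra]. unfold Rdiv. apply Rmult_lt_0_compat; [nra|].
      apply Rinv_0_lt_compat; lra.
    - replace (2 * PI * INR j / INR n / 2) with (PI * (INR j / INR n)) by (field; lra).
      pose proof PI_RGT_0. assert (INR j / INR n < 1).
      { apply (Rmult_lt_reg_r (INR n)); auto. unfold Rdiv. rewrite Rmult_assoc, Rinv_l; lra. }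
      nra. }
  replace (a + INR n * b - b/2) with ((a - b/2) + 2 * INR j * PI) in H
    by (unfold b; field; lra).
  rewrite sin_period in H.
  assert (2 * sin (b/2) * sumR (fun p => cos (a + INR p * b)) n = 0) by lra.
  apply Rmult_integral in H0. destruct H0; [lra|auto].
Qed.

Definition Dir (k : nat) (phi : R) := 1 + 2 * sumR (fun j => cos (INR (S j) * phi)) k.
Definition Fej (n : nat) (phi : R) := sumR (fun k => Dir k phi) n.

Lemma dir_id k phi : (1 - cos phi) * Dir k phi = cos (INR k * phi) - cos (INR (S k) * phi).
Proof.
  induction k.
  - unfold Dir; simpl. rewrite Rmult_0_l, cos_0, Rmult_1_l. ring.
  - unfold Dir in *. rewrite sumR_S.
    assert (E : forall X Y, (1 - cos phi) * (1 + 2*(X + Y)) = (1 - cos phi)*(1+2*X) + 2*Y - 2*cos phi*Y) by (intros; ring).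
    rewrite E.
    rewrite IHk.
    set (c := INR (S k) * phi).
    replace (INR k * phi) with (c - phi) by (unfold c; rewrite S_INR; ring).
    replace (INR (S (S k)) * phi) with (c + phi) by (unfold c; rewrite !S_INR; ring).
    rewrite cos_plus, cos_minus. ring.
Qed.

Lemma fej_id n phi : (1 - cos phi) * Fej n phi = 1 - cos (INR n * phi).
Proof.
  induction n.
  - unfold Fej; simpl. rewrite Rmult_0_l, cos_0. ring.
  - unfold Fej in *. rewrite sumR_S. rewrite Rmult_plus_distr_l, IHn, dir_id. ring.
Qed.

Lemma fej_sum n phi0 : (1 <= n)%nat ->
  sumR (fun p => Fej n (phi0 + INR p * (2*PI/INR n))) n = INR n ^ 2.
Proof.
  intros hn. assert (hn' : 0 < INR n) by (apply lt_0_INR; lia).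
  unfold Fej. rewrite sumR_swap.
  transitivity (sumR (fun _ => INR n) n).
  2:{ rewrite sumR_const. ring. }
  apply sumR_ext. intros k hk. unfold Dir.
  rewrite sumR_plus, sumR_const, sumR_scal, sumR_swap.
  rewrite (sumR_ext _ (fun _ => 0)).
  { rewrite sumR_const. ring. }
  intros j hj.
  rewrite <- (cos_sum_zero (INR (S j) * phi0) n (S j)) by lia.
  apply sumR_ext. intros p hp. f_equal. field. lra.
Qed.

Lemma fejer_main n phi0 : (1 <= n)%nat ->
  (forall p, (p < n)%nat -> cos (phi0 + INR p * (2*PI/INR n)) <> 1) ->
  sumR (fun p => (1 - cos (INR n * phi0)) / (1 - cos (phi0 + INR p * (2*PI/INR n)))) n = INR n ^ 2.
Proof.
  intros hn hc. assert (hn' : 0 < INR n) by (apply lt_0_INR; lia).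
  rewrite <- (fej_sum n phi0 hn). apply sumR_ext. intros p hp.
  pose proof (fej_id n (phi0 + INR p * (2*PI/INR n))).
  replace (INR n * (phi0 + INR p * (2 * PI / INR n))) with (INR n * phi0 + 2 * INR p * PI) in H
    by (field; lra).
  rewrite cos_period in H. rewrite <- H. field.
  intro; apply (hc p hp). lra.
Qed.

Definition hx (x k : R) := (1 - cos (2*PI*x)) / (2*PI^2*(x+k)^2).

Lemma cos_minus_per y M : cos (y - 2 * INR M * PI) = cos y.
Proof. rewrite <- (cos_period (y - 2 * INR M * PI) M). f_equal; ring. Qed.

Lemma INR_2M M : INR (2*M) = 2 * INR M.
Proof. rewrite mult_INR. simpl. ring. Qed.

Lemma xk_ne0 x p M : -1/2 < x <= 1/2 -> x <> 0 -> x + (INR p - INR M) <> 0.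
Proof.
  intros hx hx0. destruct (Nat.lt_total p M) as [h|[h|h]].
  - assert (INR (S p) <= INR M) by (apply le_INR; lia). rewrite S_INR in H. lra.
  - subst. lra.
  - assert (INR (S M) <= INR p) by (apply le_INR; lia). rewrite S_INR in H. lra.
Qed.

Lemma xk_abs x p M : -1/2 < x <= 1/2 -> (p <= 2*M)%nat -> Rabs (x + (INR p - INR M)) <= INR M + 1/2.
Proof.
  intros hx hp. assert (INR p <= 2 * INR M) by (rewrite <- INR_2M; apply le_INR; lia).
  pose proof (pos_INR p). apply Rabs_le. lra.
Qed.

Lemma hx_nonneg x k : 0 <= hx x k.
Proof. unfold hx. pose proof (one_m_cos_ge0 (2*PI*x)).
  apply Rmult_le_pos; auto. destruct (Req_dec (x+k) 0).
  - rewrite H0. replace (2*PI^2*0^2) with 0 by ring. rewrite Rinv_0. lra.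
  - left. apply Rinv_0_lt_compat. pose proof (pow2_gt_0 _ H0). pose proof PI_RGT_0.
    assert (0 < PI^2) by (apply pow_lt; lra). nra.
Qed.

Lemma window_bounds x M : -1/2 < x <= 1/2 -> x <> 0 ->
  let n := INR (2*M+1) in
  n^2 * sumR (fun p => hx x (INR p - INR M)) (2*M+1) <= n^2 <=
  n^2 * sumR (fun p => hx x (INR p - INR M)) (2*M+1) + 2 * n.
Proof.
  intros hxb hx0 n.
  assert (hn : 0 < n) by (apply lt_0_INR; lia).
  set (phi0 := 2*PI*(x - INR M)/n).
  assert (hphi : forall p, phi0 + INR p * (2*PI/INR (2*M+1)) = 2*PI*(x + (INR p - INR M))/n).
  { intros p. unfold phi0. fold n. field. lra. }
  assert (hy : forall p, (p < 2*M+1)%nat -> let y := phi0 + INR p * (2*PI/INR (2*M+1)) in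
     y <> 0 /\ Rabs y <= PI).
  { intros p hp y. unfold y. rewrite hphi. pose proof PI_RGT_0.
    pose proof (xk_ne0 x p M hxb hx0). pose proof (xk_abs x p M hxb ltac:(lia)).
    split.
    - unfold Rdiv. apply Rmult_integral_contrapositive; split.
      + apply Rmult_integral_contrapositive; split; lra.
      + apply Rinv_neq_0_compat; lra.
    - unfold Rdiv. rewrite !Rabs_mult. rewrite (Rabs_right 2) by lra. rewrite (Rabs_right PI) by lra.
      rewrite (Rabs_right (/n)) by (left; apply Rinv_0_lt_compat; lra).
      assert (n = 2 * INR M + 1) by (unfold n; rewrite plus_INR, INR_2M; simpl; ring).
      apply (Rmult_le_reg_r n); auto. rewrite Rmult_assoc, Rinv_l by lra. nra. }
  pose proof (fejer_main (2*M+1) phi0 ltac:(lia)) as F.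
  assert (hc : forall p, (p < 2*M+1)%nat -> cos (phi0 + INR p * (2*PI/INR (2*M+1))) <> 1).
  { intros p hp. destruct (hy p hp) as [h1 h2]. destruct (inv_cos_bounds _ h1 h2). lra. }
  specialize (F hc). fold n in F.
  replace (n * phi0) with (2*PI*x - 2 * INR M * PI) in F by (unfold phi0; field; lra).
  rewrite cos_minus_per in F.
  assert (hterm : forall p, (p < 2*M+1)%nat ->
     n^2 * hx x (INR p - INR M) <= (1 - cos (2*PI*x)) / (1 - cos (phi0 + INR p * (2*PI/INR (2*M+1))))
     <= n^2 * hx x (INR p - INR M) + 2).
  { intros p hp. destruct (hy p hp) as [h1 h2]. destruct (inv_cos_bounds _ h1 h2) as [h3 [h4 h5]].
    revert h1 h2 h3 h4 h5. rewrite hphi. intros.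
    pose proof (one_m_cos_ge0 (2*PI*x)). pose proof (one_m_cos_le2 (2*PI*x)).
    pose proof (xk_ne0 x p M hxb hx0).
    set (k := x + (INR p - INR M)) in *.
    assert (E : n^2 * hx x (INR p - INR M) = (1 - cos (2*PI*x)) * (2 / (2 * PI * k / n) ^ 2)).
    { unfold hx. fold k. pose proof PI_RGT_0. field. repeat split; lra. }
    rewrite E. unfold Rdiv at 3. split.
    - apply Rmult_le_compat_l; lra.
    - assert ((1 - cos (2 * PI * x)) * / (1 - cos (2 * PI * k / n)) <= (1 - cos (2 * PI * x)) * (2 / (2 * PI * k / n) ^ 2 + 1))
        by (apply Rmult_le_compat_l; lra). nra. }
  split.
  - rewrite <- F at 2. rewrite <- sumR_scal. apply sumR_le. intros; apply hterm; auto.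
  - rewrite <- F at 1. rewrite <- sumR_scal.
    replace (2*n) with (sumR (fun _ => 2) (2*M+1)) by (rewrite sumR_const; unfold n; ring).
    rewrite <- sumR_plus. apply sumR_le. intros; apply hterm; auto.
Qed.

Definition Sym (F : R -> R) (M : nat) := F 0 + sumR (fun j => F (INR (S j)) + F (- INR (S j))) M.

Lemma window_sym F M : sumR (fun p => F (INR p - INR M)) (2*M+1) = Sym F M.
Proof.
  unfold Sym. induction M.
  - simpl. replace (0 - 0) with 0 by lra. lra.
  - replace (2 * S M + 1)%nat with (S (S (2*M+1))) by lia.
    rewrite sumR_S, sumR_shift.
    rewrite (sumR_ext _ (fun p => F (INR p - INR M))).
    2:{ intros i _. f_equal. rewrite !S_INR. ring. }
    rewrite IHM, sumR_S.
    replace (INR 0 - INR (S M)) with (- INR (S M)) by (simpl; lra).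
    replace (INR (S (2 * M + 1)) - INR (S M)) with (INR (S M)).
    2:{ rewrite !S_INR, plus_INR, INR_2M. simpl. lra. }
    ring.
Qed.

Lemma hx_one x k K : 2 <= K -> K - 1/2 <= Rabs (x+k) -> hx x k <= 1/PI^2 * (1/(K-1) - 1/K).
Proof.
  intros hK hk. unfold hx. pose proof (one_m_cos_le2 (2*PI*x)). pose proof (one_m_cos_ge0 (2*PI*x)).
  pose proof PI_RGT_0. assert (hp : 0 < PI^2) by (apply pow_lt; lra).
  assert (hk2 : K*(K-1) <= (x+k)^2).
  { rewrite <- pow2_abs. assert (0 <= K - 1/2) by lra. nra. }
  replace (1/PI^2 * (1/(K-1) - 1/K)) with (2 * / (2*PI^2*(K*(K-1)))) by (field; split; lra).
  unfold Rdiv. apply Rmult_le_compat; try lra.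
  - assert (0 < (x+k)^2) by nra. left; apply Rinv_0_lt_compat. apply Rmult_lt_0_compat; lra.
  - assert (0 < K*(K-1)) by nra. apply Rinv_le_contravar. apply Rmult_lt_0_compat; lra.
    apply Rmult_le_compat_l; lra.
Qed.

Lemma hx_tail x K : -1/2 < x <= 1/2 -> 2 <= K -> hx x K + hx x (-K) <= 2/PI^2 * (1/(K-1) - 1/K).
Proof.
  intros hxb hK.
  assert (h1 : K - 1/2 <= Rabs (x+K)) by (rewrite Rabs_right; lra).
  assert (h2 : K - 1/2 <= Rabs (x+ -K)) by (rewrite Rabs_left; lra).
  pose proof (hx_one x K K hK h1). pose proof (hx_one x (-K) K hK h2). lra.
Qed.

Lemma sym_tail x B d : -1/2 < x <= 1/2 -> (1 <= B)%nat ->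
  Sym (hx x) (B + d) <= Sym (hx x) B + 2/PI^2 * (1/INR B - 1/INR (B+d)).
Proof.
  intros hxb hB. assert (hB' : 1 <= INR B) by (apply (le_INR 1); auto).
  induction d.
  - rewrite Nat.add_0_r. lra.
  - replace (B + S d)%nat with (S (B+d)) by lia. unfold Sym in *. rewrite sumR_S.
    pose proof (hx_tail x (INR (S (B+d))) hxb).
    assert (hK : 2 <= INR (S (B+d))) by (rewrite S_INR, plus_INR; pose proof (pos_INR d); lra).
    specialize (H hK). replace (INR (S (B+d)) - 1) with (INR (B+d)) in H by (rewrite S_INR; ring).
    lra.
Qed.

Lemma G_bounds x B : -1/2 < x <= 1/2 -> x <> 0 -> (1 <= B)%nat ->
  let G := sumR (fun p => hx x (INR p - INR B)) (2*B+1) in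
  1 - 2/(PI^2 * INR B) <= G <= 1.
Proof.
  intros hxb hx0 hB G.
  assert (hB' : 1 <= INR B) by (apply (le_INR 1); auto).
  pose proof PI_RGT_0. assert (hp : 0 < PI^2) by (apply pow_lt; lra).
  split.
  - assert (key : forall d, 1 - 2 / INR (2*(B+d)+1) <= G + 2/(PI^2 * INR B)).
    { intros d. pose proof (window_bounds x (B+d) hxb hx0) as W. cbv zeta in W.
      set (n := INR (2*(B+d)+1)) in *.
      assert (hn : 1 <= n) by (unfold n; apply (le_INR 1); lia).
      destruct W as [_ W].
      rewrite window_sym in W. pose proof (sym_tail x B d hxb hB).
      assert (G = Sym (hx x) B) by (unfold G; apply window_sym).
      assert (hBd : INR B <= INR (B+d)) by (apply le_INR; lia).
      assert (0 <= 1 / INR (B+d)) by (unfold Rdiv; rewrite Rmult_1_l; left; apply Rinv_0_lt_compat; lra).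
      assert (Sym (hx x) (B+d) >= 1 - 2/n).
      { apply Rle_ge. apply (Rmult_le_reg_l (n^2)). nra.
        replace (n^2 * (1 - 2/n)) with (n^2 - 2*n) by (field; lra). lra. }
      replace (2 / (PI^2 * INR B)) with (2/PI^2 * (1/INR B)) by (field; lra).
      assert (2/PI^2 * (1/INR B - 1/INR (B+d)) <= 2/PI^2 * (1/INR B)).
      { apply Rmult_le_compat_l. unfold Rdiv; apply Rmult_le_pos; [lra|left; apply Rinv_0_lt_compat; lra]. lra. }
      lra. }
    destruct (Rle_dec (1 - 2/(PI^2 * INR B)) G) as [|hlt]; auto.
    exfalso. set (eps := 1 - 2/(PI^2 * INR B) - G).
    assert (he : 0 < eps) by (unfold eps; lra).
    destruct (archimed (2/eps)) as [ha _].
    assert (hz : (0 <= up (2/eps))%Z).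
    { apply le_IZR. assert (0 < 2/eps) by (unfold Rdiv; apply Rmult_lt_0_compat; [lra|apply Rinv_0_lt_compat; lra]). simpl. lra. }
    set (d := Z.to_nat (up (2/eps))).
    assert (hd : INR d = IZR (up (2/eps))) by (unfold d; rewrite INR_IZR_INZ, Znat.Z2Nat.id; auto).
    specialize (key d).
    assert (hN : 2/eps < INR (2*(B+d)+1)).
    { rewrite plus_INR, INR_2M, plus_INR, hd, INR_1. pose proof (pos_INR B). assert (0 < 2/eps) by (unfold Rdiv; apply Rmult_lt_0_compat; [lra|apply Rinv_0_lt_compat; lra]). lra. }
    assert (2 / INR (2*(B+d)+1) < eps).
    { assert (0 < INR (2*(B+d)+1)) by (apply lt_0_INR; lia).
      apply (Rmult_lt_reg_r (INR (2*(B+d)+1))); auto. unfold Rdiv at 1. rewrite Rmult_assoc, Rinv_l by lra.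
      apply (Rmult_lt_reg_l (/eps)). apply Rinv_0_lt_compat; lra.
      replace (/eps * (eps * INR (2 * (B + d) + 1))) with (INR (2 * (B + d) + 1)) by (field; lra).
      replace (/eps * (2*1)) with (2/eps) by (field; lra). lra. }
    unfold eps in *. lra.
  - pose proof (window_bounds x B hxb hx0) as W. cbv zeta in W. destruct W as [W _].
    set (n := INR (2*B+1)) in *. assert (0 < n) by (unfold n; apply lt_0_INR; lia).
    apply (Rmult_le_reg_l (n^2)). nra. fold G in W. lra.
Qed.

Lemma term_bound (N r b L x t al : R) :
  0 < N -> 0 < r -> 0 <= b <= r -> N = r*L + b ->
  (forall y, cos (2*PI*t + y) = cos y) -> x + t <> 0 -> al = r*(x+t) -> Rabs al <= N/2 ->
  Rabs ( b/(N^2) * ((1 - cos (2*PI*al*(L+1)/N)) / (1 - cos (2*PI*al/N)))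
       + (r - b)/(N^2) * ((1 - cos (2*PI*al*L/N)) / (1 - cos (2*PI*al/N)))
       - hx x t / r ) <= 11/4 * r / N^2.
Proof.
  intros hN hr hb hNL hper hxt hal habs.
  pose proof PI_RGT_0 as hpi.
  assert (hq : 0 < (x+t)^2) by (apply pow2_gt_0; auto).
  assert (hpi2 : 0 < PI^2) by (apply pow_lt; lra). assert (hr2 : 0 < r^2) by (apply pow_lt; lra).
  assert (hden : 0 < 2*PI^2*r^2*(x+t)^2) by (apply Rmult_lt_0_compat; [apply Rmult_lt_0_compat; [apply Rmult_lt_0_compat|]|]; lra).
  assert (hN2 : 0 < N^2) by (apply pow_lt; lra).
  assert (hal0 : al <> 0) by (rewrite hal; apply Rmult_integral_contrapositive; split; lra).
  set (th := 2*PI*al/N).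
  assert (hth0 : th <> 0).
  { intro h. assert (th * N = 2*PI*al) by (unfold th; field; lra). rewrite h in H.
    assert (2*PI*al = 0) by lra. apply Rmult_integral in H0. destruct H0; [lra|auto]. }
  assert (hthb : Rabs th <= PI).
  { unfold th, Rdiv. rewrite !Rabs_mult. rewrite (Rabs_right 2), (Rabs_right PI), (Rabs_right (/N)) by
      (try lra; left; apply Rinv_0_lt_compat; lra).
    apply (Rmult_le_reg_r N); auto. rewrite Rmult_assoc, Rinv_l by lra. nra. }
  destruct (inv_cos_bounds th hth0 hthb) as [hpos [hc1 hc2]].
  set (c := / (1 - cos th) - 2 / th^2).
  assert (hc : 0 <= c <= 1) by (unfold c; lra).
  set (a := 2*PI*x).
  set (b1 := 2*PI*(r-b)*(x+t)/N).
  set (b2 := -(2*PI*b*(x+t)/N)).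
  assert (hNz : r*L+b <> 0) by lra.
  assert (eA1 : cos (2*PI*al*(L+1)/N) = cos (a + b1)).
  { rewrite <- (hper (a+b1)). f_equal. unfold a, b1. rewrite hal, hNL. field. auto. }
  assert (eA2 : cos (2*PI*al*L/N) = cos (a + b2)).
  { rewrite <- (hper (a+b2)). f_equal. unfold a, b2. rewrite hal, hNL. field. auto. }
  rewrite eA1, eA2.
  pose proof (E_lemma a b1) as E1. pose proof (E_lemma a b2) as E2.
  set (f := 1 - cos a) in *.
  set (A1 := 1 - cos (a+b1)) in *. set (A2 := 1 - cos (a+b2)) in *.
  assert (hsum : b*b1 + (r-b)*b2 = 0) by (unfold b1, b2; field; lra).
  set (D := b*A1 + (r-b)*A2 - r*f).
  assert (hD : D = b*(A1 - f - b1*sin a) + (r-b)*(A2 - f - b2*sin a) + sin a * (b*b1 + (r-b)*b2))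
    by (unfold D; ring).
  assert (hDb : Rabs D <= b * (3/2*b1^2) + (r-b)*(3/2*b2^2)).
  { rewrite hD, hsum, Rmult_0_r, Rplus_0_r. eapply Rle_trans. apply Rabs_triang.
    rewrite !Rabs_mult, (Rabs_right b), (Rabs_right (r-b)) by lra.
    apply Rplus_le_compat; apply Rmult_le_compat_l; lra. }
  assert (hDb2 : b * (3/2*b1^2) + (r-b)*(3/2*b2^2) = 6*PI^2*(x+t)^2*(b*(r-b))*r/N^2)
    by (unfold b1, b2; field; lra).
  assert (hbr : b*(r-b) <= r^2/4) by (pose proof (Rle_0_sqr (r-2*b)); unfold Rsqr in *; nra).
  assert (hDb3 : Rabs D <= 3/2*PI^2*(x+t)^2*r^3/N^2).
  { rewrite hDb2 in hDb. eapply Rle_trans; [exact hDb|].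
    unfold Rdiv. apply Rmult_le_compat_r. left; apply Rinv_0_lt_compat; nra.
    assert (0 <= 6*PI^2*(x+t)^2) by nra.
    assert (6 * PI ^ 2 * (x + t) ^ 2 * (b * (r - b)) <= 6 * PI ^ 2 * (x + t) ^ 2 * (r^2/4)) by
      (apply Rmult_le_compat_l; lra).
    nra. }
  assert (hA : 0 <= A1 <= 2 /\ 0 <= A2 <= 2).
  { unfold A1, A2. pose proof (one_m_cos_ge0 (a+b1)). pose proof (one_m_cos_le2 (a+b1)).
    pose proof (one_m_cos_ge0 (a+b2)). pose proof (one_m_cos_le2 (a+b2)). lra. }
  set (S := b*A1 + (r-b)*A2).
  assert (hS : 0 <= S <= 2*r) by (unfold S; nra).
  assert (hform : b / N ^ 2 * (A1 / (1 - cos th)) + (r - b) / N ^ 2 * (A2 / (1 - cos th)) - hx x t / r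
     = D / (2*PI^2*r^2*(x+t)^2) + S * c / N^2).
  { unfold c, D, S, hx, th. fold a. fold f. rewrite hal. field. repeat split; try lra; auto.
    rewrite <- hal. fold th. lra. }
  rewrite hform.
  eapply Rle_trans. apply Rabs_triang.
  assert (h1 : Rabs (D / (2*PI^2*r^2*(x+t)^2)) <= 3/4 * r / N^2).
  { unfold Rdiv at 1. rewrite Rabs_mult. rewrite (Rabs_right (/ _)) by (left; apply Rinv_0_lt_compat; lra).
    apply (Rmult_le_reg_r (2*PI^2*r^2*(x+t)^2)). lra.
    rewrite Rmult_assoc, Rinv_l by lra. rewrite Rmult_1_r.
    replace (3/4*r/N^2 * (2*PI^2*r^2*(x+t)^2)) with (3/2*PI^2*(x+t)^2*r^3/N^2) by (field; lra). auto. }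
  assert (h2 : Rabs (S * c / N^2) <= 2 * r / N^2).
  { rewrite Rabs_right. unfold Rdiv. apply Rmult_le_compat_r. left; apply Rinv_0_lt_compat; nra. nra.
    apply Rle_ge. unfold Rdiv. apply Rmult_le_pos. nra. left; apply Rinv_0_lt_compat; nra. }
  replace (11/4 * r / N^2) with (3/4*r/N^2 + 2*r/N^2) by (field; lra). lra.
Qed.

Theorem theorem1 (r m l B : nat) (alpha0 : R)
  (hr : (2 <= r)%nat) (hm : (1 <= m)%nat) (hl : (1 <= l)%nat)
  (hrm : (r < 2 ^ m)%nat)
  (ha0 : alpha0 <> 0) (ha1 : - INR r / 2 < alpha0) (ha2 : alpha0 <= INR r / 2)
  (hB1 : (1 <= B)%nat)
  (hB2 : INR B < (INR (Nn m l) / INR r - 1) / 2) :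
  exists epsR epsA : R,
    sumP r m l alpha0 B = / INR r * (1 - epsR) + epsA /\
    0 <= epsR /\
    epsR <= / PI ^ 2 * (2 / INR B + 1 / INR B ^ 2 + 1 / (3 * INR B ^ 3)) /\
    Rabs epsA <= (2 * INR B + 1) * eps_tilde r m l.
Proof.
  assert (hdm : Nn m l = (r * Lq r m l + beta r m l)%nat).
  { unfold Lq, beta. apply Nat.div_mod_eq. }
  assert (hbr : (beta r m l < r)%nat) by (unfold beta; apply Nat.mod_upper_bound; lia).
  assert (hrN : (r < Nn m l)%nat).
  { unfold Nn. eapply Nat.lt_le_trans; [exact hrm|]. apply Nat.pow_le_mono_r; lia. }
  set (N := INR (Nn m l)) in *. set (b := INR (beta r m l)). set (L := INR (Lq r m l)).
  set (R := INR r) in *.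
  assert (hR : 2 <= R) by (unfold R; apply (le_INR 2); auto).
  assert (hRN : R < N) by (unfold R, N; apply lt_INR; auto).
  assert (hb : 0 <= b <= R) by (unfold b, R; split; [apply pos_INR| apply le_INR; lia]).
  assert (hNL : N = R*L + b) by (unfold N, R, L, b; rewrite hdm, plus_INR, mult_INR; ring).
  assert (hBN : R * (2*INR B + 1) < N).
  { apply (Rmult_lt_compat_l R) in hB2; [|lra]. unfold Rdiv in hB2.
    replace (R * ((N * / R - 1) * / 2)) with ((N - R)/2) in hB2 by (field; lra). lra. }
  assert (hB' : 1 <= INR B) by (apply (le_INR 1); auto).
  set (x := alpha0 / R).
  assert (hxb : -1/2 < x <= 1/2).
  { assert (hxa : alpha0 = x*R) by (unfold x; field; lra). rewrite hxa in ha1, ha2.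
    unfold Rdiv in ha1, ha2. split; nra. }
  assert (hx0 : x <> 0).
  { unfold x. unfold Rdiv. apply Rmult_integral_contrapositive; split; auto.
    apply Rinv_neq_0_compat; lra. }
  pose proof (G_bounds x B hxb hx0 hB1) as HG. cbv zeta in HG.
  set (G := sumR (fun p => hx x (INR p - INR B)) (2*B+1)) in HG.
  exists (1 - G), (sumP r m l alpha0 B - G / R).
  pose proof PI_RGT_0. pose proof PI2_1. assert (hpi2 : 4 < PI^2) by nra.
  split; [field; lra|]. split; [lra|]. split.
  - assert (0 <= 1 / INR B ^ 2 + 1 / (3 * INR B ^ 3)).
    { assert (0 < INR B ^ 2) by (apply pow_lt; lra). assert (0 < INR B ^ 3) by (apply pow_lt; lra).
      assert (0 < 1 / INR B ^ 2) by (unfold Rdiv; rewrite Rmult_1_l; apply Rinv_0_lt_compat; lra).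
      assert (0 < 1 / (3 * INR B ^ 3)) by (unfold Rdiv; rewrite Rmult_1_l; apply Rinv_0_lt_compat; lra).
      lra. }
    replace (/ PI ^ 2 * (2 / INR B + 1 / INR B ^ 2 + 1 / (3 * INR B ^ 3)))
      with (2 / (PI^2 * INR B) + / PI^2 * (1 / INR B ^ 2 + 1 / (3 * INR B ^ 3))) by (field; lra).
    assert (0 <= / PI^2 * (1 / INR B ^ 2 + 1 / (3 * INR B ^ 3))).
    { apply Rmult_le_pos; auto. left; apply Rinv_0_lt_compat; lra. }
    lra.
  -
    assert (hGs : G / R = sum_f_R0 (fun i => hx x (INR i - INR B) / R) (2*B)).
    { unfold G. replace (2*B+1)%nat with (S (2*B)) by lia. rewrite sumR_sum_f.
      unfold Rdiv. rewrite Rmult_comm, scal_sum. auto. }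
    rewrite hGs. unfold sumP. rewrite <- minus_sum.
    eapply Rle_trans. apply sum_f_R0_triangle.
    eapply Rle_trans. apply (sum_Rle _ (fun _ => 11/4 * R / N^2)).
    + intros i hi. fold R. unfold P. cbv zeta. fold N b L R.
      apply (term_bound N R b L x (INR i - INR B)); try lra.
      * intros y. replace (2 * PI * (INR i - INR B) + y) with ((y - 2 * INR B * PI) + 2 * INR i * PI) by ring.
        rewrite cos_period, cos_minus_per. auto.
      * apply xk_ne0; auto.
      * unfold x. field. lra.
      * pose proof (xk_abs x i B hxb hi).
        replace (alpha0 + R * (INR i - INR B)) with (R * (x + (INR i - INR B))) by (unfold x; field; lra).
        rewrite Rabs_mult, (Rabs_right R) by lra.
        apply Rle_trans with (R * (INR B + 1/2)). apply Rmult_le_compat_l; lra. lra.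
    + rewrite sum_cte. rewrite S_INR, INR_2M.
      unfold eps_tilde. fold N R.
      assert (0 < N) by lra.
      assert (11/4 * R / N^2 <= PI ^ 2 / N * (3 / 4 + R / N * (1 / 12))).
      { assert (0 <= R / N * (1/12)) by (unfold Rdiv; apply Rmult_le_pos; [apply Rmult_le_pos; try lra; left; apply Rinv_0_lt_compat; lra | lra]).
        assert (11/4 * R / N^2 <= 11/4 / N).
        { apply (Rmult_le_reg_r (N^2)). apply pow_lt; lra.
          replace (11/4 * R / N^2 * N^2) with (11/4 * R) by (field; lra).
          replace (11/4 / N * N^2) with (11/4 * N) by (field; lra). lra. }
        assert (11/4 / N <= PI^2 / N * (3/4)).
        { replace (11/4/N) with ((11/4) * /N) by (field; lra).
          replace (PI^2/N*(3/4)) with ((PI^2*(3/4)) * /N) by (field; lra).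
          apply Rmult_le_compat_r. left; apply Rinv_0_lt_compat; lra. lra. }
        assert (PI^2 / N * (3/4) <= PI^2/N * (3/4 + R/N*(1/12))).
        { apply Rmult_le_compat_l. unfold Rdiv; apply Rmult_le_pos; [lra|left; apply Rinv_0_lt_compat; lra]. lra. }
        lra. }
      assert (0 <= 2 * INR B + 1) by lra.
      rewrite Rmult_comm. apply Rmult_le_compat_l; lra.
Qed.
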